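(* Let $d=2$, let $M\ge1$ be a real number, let $\alpha,\lambda\in\overline{\mathbb Q}$, and let $|\cdot|_v$ be an absolute value on $\overline{\mathbb Q}$. If $|\alpha|_v\ge\frac{|\lambda|_v}{M}\ge8M$, then for all integers $0\le n_0\le n$, $$\left|\frac{\log M_{n,v}}{2^n}-\frac{\log M_{n_0,v}}{2^{n_0}}\right|\le1+8M.$$
   Context: Define $A_0=\alpha$, $B_0=1$, and for $n\ge0$, $A_{n+1}=A_n^2+\lambda B_n^2$, $B_{n+1}=A_nB_n$ (so $[A_n:B_n]$ is the $n$-th iterate of $\alpha$ under $z\mapsto(z^2+\lambda)/z$). Set $M_{n,v}=\max\{|A_n|_v,|B_n|_v\}$. *)

(* Defs.v *)
(* Qbar = algC, absolute values valued in a realType R. *)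
From HB Require Import structures.
From mathcomp Require Import all_boot all_order all_algebra all_field.
From mathcomp Require Import all_classical all_reals exp.
Set Implicit Arguments. Unset Strict Implicit. Unset Printing Implicit Defensive.
Import Order.TTheory GRing.Theory Num.Theory.
Local Open Scope ring_scope.

Definition is_absval (R : realType) (v : algC -> R) : Prop :=
  [/\ forall x, 0 <= v x,
      forall x, v x = 0 <-> x = 0,
      forall x y, v (x * y) = v x * v y &
      forall x y, v (x + y) <= v x + v y].

Fixpoint AB (alpha lambda : algC) (n : nat) : algC * algC :=
  match n with
  | 0%N => (alpha, 1)
  | n'.+1 => let '(a, b) := AB alpha lambda n' in
             (a ^+ 2 + lambda * b ^+ 2, a * b)
  end.

Definition A_seq (alpha lambda : algC) (n : nat) : algC := (AB alpha lambda n).1.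
Definition B_seq (alpha lambda : algC) (n : nat) : algC := (AB alpha lambda n).2.

Definition Mnv (R : realType) (v : algC -> R) (alpha lambda : algC) (n : nat) : R :=
  Num.max (v (A_seq alpha lambda n)) (v (B_seq alpha lambda n)).

(* Main.v *)
Require Import Defs.
From HB Require Import structures.
From mathcomp Require Import all_boot all_order all_algebra all_field.
From mathcomp Require Import all_classical all_reals exp.
From mathcomp Require Import lra ring.
Import Order.TTheory GRing.Theory Num.Theory.
Local Open Scope ring_scope.

Section Aux.
Variable R : realType.


Lemma gen_lower (l a b a' m m' : R) : 8 <= l -> 0 <= a -> 0 <= b -> 0 <= a' ->
  a^+2 - l * b^+2 <= a' -> l * b^+2 - a^+2 <= a' ->
  a <= m -> b <= m -> (m = a \/ m = b) -> a' <= m' -> a * b <= m' ->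
  m^+2 <= (1 + l) * m'.
Proof.
move=> l8 a0 b0 a'0 h1 h2 am bm [->|->] h3 h4.
- have [c|c] := leP a (b * (1 + l)).
  + apply: (le_trans _ (ler_wpM2l _ h4)); last lra.
    have := ler_wpM2l a0 c; lra.
  + apply: (le_trans _ (ler_wpM2l _ h3)); last lra.
    have c1 : (b * (1 + l))^+2 <= a^+2.
      by apply: lerXn2r; rewrite ?nnegrE //; nra.
    have c2 : (1 + l) * b^+2 <= (b * (1 + l))^+2 by nra.
    nra.
- have [c|c] := leP b (a * (1 + l)).
  + apply: (le_trans _ (ler_wpM2l _ h4)); last lra.
    have := ler_wpM2l b0 c; lra.
  + apply: (le_trans _ (ler_wpM2l _ h3)); last lra.
    have c1 : (a * (1 + l))^+2 <= b^+2.
      by apply: lerXn2r; rewrite ?nnegrE //; nra.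
    have c2 : (1 + l) * a^+2 <= (a * (1 + l))^+2 by nra.
    nra.
Qed.

Lemma gen_upper (l a b a' m m' : R) : 8 <= l -> 0 <= a -> 0 <= b -> 0 <= a' ->
  a' <= a^+2 + l * b^+2 -> 
  a <= m -> b <= m -> (m' = a' \/ m' = a * b) ->
  m' <= (1 + l) * m^+2.
Proof.
move=> l8 a0 b0 a'0 h1 am bm hm'.
have ha : a^+2 <= m^+2 by apply: lerXn2r; rewrite ?nnegrE //; lra.
have hb : b^+2 <= m^+2 by apply: lerXn2r; rewrite ?nnegrE //; lra.
have hab : a * b <= m^+2 by rewrite expr2; apply: ler_pM.
case: hm' => ->; nra.
Qed.

Lemma good_bounds (l rho a b a' m m' : R) : 0 <= l -> 1 <= rho -> 2 * l <= rho ^+ 2 ->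
  0 <= a -> 0 <= b -> 0 <= a' -> rho * b <= a ->
  a^+2 - l * b^+2 <= a' -> a' <= a^+2 + l * b^+2 ->
  (m = a \/ m = b) -> (m' = a' \/ m' = a * b) -> a' <= m' -> a <= m -> b <= m ->
  m^+2 <= 2 * m' /\ m' <= 2 * m^+2.
Proof.
move=> l0 r1 r2 a0 b0 a'0 rb h1 h2 hm hm' h3 am bm.
have bb : 2 * l * b^+2 <= a^+2.
  have : (rho * b)^+2 <= a^+2 by apply: lerXn2r => //; rewrite ?nnegrE; nra.
  nra.
have ba : b <= a by nra.
have -> : m = a by case: hm => E; rewrite E in am bm *; lra.
split; first lra.
have hab : a * b <= a^+2 by rewrite expr2; apply: ler_wpM2l.
case: hm' => ->; lra.
Qed.


Lemma ln_step (x y c : R) : 0 < x -> 0 < y -> 1 <= c ->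
  y <= c * x -> x <= c * y -> `|ln x - ln y| <= ln c.
Proof.
move=> x0 y0 c1 h1 h2.
have c0 : 0 < c by lra.
have e1 : ln y <= ln c + ln x.
  by rewrite -lnM ?posrE // ler_ln ?posrE // mulr_gt0.
have e2 : ln x <= ln c + ln y.
  by rewrite -lnM ?posrE // ler_ln ?posrE // mulr_gt0.
rewrite ler_norml; apply/andP; split; lra.
Qed.

Lemma step_h (x y c : R) (k : nat) : 0 < x -> 0 < y -> 1 <= c ->
  y^+2 <= c * x -> x <= c * y^+2 ->
  `|ln x / 2^+k.+1 - ln y / 2^+k| <= ln c / 2^+k.+1.
Proof.
move=> x0 y0 c1 h1 h2.
have p0 : 0 < (2:R)^+k by apply: exprn_gt0.
have -> : ln x / 2^+k.+1 - ln y / 2^+k = (ln x - ln (y^+2)) / 2^+k.+1.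
  by rewrite lnXn // exprS; field; rewrite gt_eqF.
rewrite normrM (ger0_norm (_ : 0 <= _^-1)); last by rewrite invr_ge0 exprn_ge0.
apply: ler_wpM2r; first by rewrite invr_ge0 exprn_ge0.
apply: ln_step => //; exact: exprn_gt0.
Qed.

Lemma tele (h : nat -> R) (c : R) (a b : nat) : 0 <= c -> (a <= b)%N ->
  (forall k, (a <= k)%N -> (k < b)%N -> `|h k.+1 - h k| <= c / 2^+k.+1) ->
  `|h b - h a| <= c / 2^+a - c / 2^+b.
Proof.
move=> c0; elim: b => [|b IH].
  by rewrite leqn0 => /eqP ->; rewrite subrr normr0 subrr.
rewrite leq_eqVlt => /orP[/eqP <-|ab] H; first by rewrite !subrr normr0.
have ab' : (a <= b)%N by [].
have IH' := IH ab' (fun k h1 h2 => H k h1 (ltnW (leq_trans h2 (leqnn _)))).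
have Hb := H b ab' (ltnSn b).
have e : c / 2^+b = c / 2^+b.+1 + c / 2^+b.+1.
  rewrite exprS; field; by rewrite gt_eqF // exprn_gt0.
have := ler_normD (h b.+1 - h b) (h b - h a).
rewrite addrA subrK; lra.
Qed.

Lemma max_cases (x y : R) : x <= Num.max x y /\ y <= Num.max x y /\
  (Num.max x y = x \/ Num.max x y = y).
Proof.
rewrite maxEle; case: ifP => h.
  by split => //; split; [exact: lexx| right].
have h' : y < x by rewrite ltNge h.
by split; [exact: lexx|split; [exact: ltW| left]].
Qed.

Lemma div_pow_mono (c : R) (a b : nat) : 0 <= c -> (a <= b)%N ->
  c / 2^+b <= c / 2^+a.
Proof.
move=> c0 ab.
have pa : 0 < (2:R)^+a by apply: exprn_gt0.
have pb : 0 < (2:R)^+b by apply: exprn_gt0.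
by apply: (ler_wpM2l c0); rewrite lef_pV2 ?posrE // ler_eXn2l // ltr1n.
Qed.
End Aux.
Arguments gen_lower {R l a b a' m m'}.
Arguments gen_upper {R l a b a' m m'}.
Arguments good_bounds {R l rho a b a' m m'}.
Arguments ln_step {R x y c}.
Arguments step_h {R x y c k}.
Arguments tele {R h c a b}.
Arguments div_pow_mono {R c a b}.

Section Abs.

Variable R : realType.
Variable v : algC -> R.
Hypothesis hv : is_absval v.

Lemma v_ge0 x : 0 <= v x. Proof. by case: hv. Qed.
Lemma vM x y : v (x * y) = v x * v y. Proof. by case: hv. Qed.
Lemma vD x y : v (x + y) <= v x + v y. Proof. by case: hv. Qed.
Lemma v1 : v 1 = 1.
Proof.
have h := vM 1 1; rewrite mulr1 in h.
have n0 : v 1 != 0.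
  apply/eqP=> e; case: hv => _ h1 _ _; move/h1: e => /eqP; by rewrite oner_eq0.
have : v 1 * (v 1 - 1) = 0 by rewrite mulrBr mulr1 -h subrr.
by move/eqP; rewrite mulf_eq0 (negPf n0) /= subr_eq0 => /eqP.
Qed.
Lemma vN x : v (- x) = v x.
Proof.
have h := vM (-1) (-1); rewrite mulrNN mulr1 v1 in h.
have h0 := v_ge0 (-1).
have e : v (-1) = 1 by nra.
by rewrite -mulN1r vM e mul1r.
Qed.
Lemma vX2 x : v (x ^+ 2) = v x ^+ 2. Proof. by rewrite !expr2 vM. Qed.

Variables alpha lambda : algC.
Lemma A_S k : A_seq alpha lambda k.+1 =
  A_seq alpha lambda k ^+ 2 + lambda * B_seq alpha lambda k ^+ 2.
Proof. by rewrite /A_seq /B_seq /=; case: (AB alpha lambda k). Qed.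
Lemma B_S k : B_seq alpha lambda k.+1 =
  A_seq alpha lambda k * B_seq alpha lambda k.
Proof. by rewrite /A_seq /B_seq /=; case: (AB alpha lambda k). Qed.

Local Notation a k := (v (A_seq alpha lambda k)).
Local Notation b k := (v (B_seq alpha lambda k)).

Lemma bS k : b k.+1 = a k * b k. Proof. by rewrite B_S vM. Qed.
Lemma aS_up k : a k.+1 <= a k ^+ 2 + v lambda * b k ^+ 2.
Proof. by rewrite A_S -!vX2 -vM vD. Qed.
Lemma aS_lo1 k : a k ^+ 2 - v lambda * b k ^+ 2 <= a k.+1.
Proof.
have := vD (A_seq alpha lambda k.+1) (- (lambda * B_seq alpha lambda k ^+ 2)).
rewrite A_S addrK vN vM !vX2; lra.
Qed.
Lemma aS_lo2 k : v lambda * b k ^+ 2 - a k ^+ 2 <= a k.+1.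
Proof.
have := vD (A_seq alpha lambda k.+1) (- (A_seq alpha lambda k ^+ 2)).
rewrite A_S addrAC subrr add0r vN vM !vX2; lra.
Qed.
End Abs.

Theorem proposition6p4 (R : realType) (M : R) (alpha lambda : algC)
    (v : algC -> R) :
  is_absval v -> 1 <= M ->
  v lambda / M <= v alpha -> 8 * M <= v lambda / M ->
  forall n0 n : nat, (n0 <= n)%N ->
  `| ln (Mnv v alpha lambda n) / 2 ^+ n
     - ln (Mnv v alpha lambda n0) / 2 ^+ n0 | <= 1 + 8 * M.
Proof.
move=> hv M1 hal hl n0 n hn.
have M0 : 0 < M by lra.
set l := v lambda in hal hl *.
set q := l / M in hal hl.
have lq : l = q * M by rewrite /q mulrVK ?unitfE ?gt_eqF.
have l0 : 0 <= l by apply: (@v_ge0 R v hv).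
have q8 : 8 * M <= q by [].
have l8M : 8 * M^+2 <= l by rewrite lq; nra.
have l8 : 8 <= l by nra.
pose a k := v (A_seq alpha lambda k).
pose b k := v (B_seq alpha lambda k).
pose m k := Mnv v alpha lambda k.
have a0 k : 0 <= a k by apply: (@v_ge0 R v hv).
have b0 k : 0 <= b k by apply: (@v_ge0 R v hv).
have mf k : a k <= m k /\ b k <= m k /\ (m k = a k \/ m k = b k)
  by apply: max_cases.
have mf' k : a k.+1 <= m k.+1 /\ a k * b k <= m k.+1 /\
    (m k.+1 = a k.+1 \/ m k.+1 = a k * b k).
  by have := mf k.+1; rewrite /b (@bS R v hv).
have AU k : a k.+1 <= a k ^+ 2 + l * b k ^+ 2 := @aS_up R v hv alpha lambda k.
have AL1 k : a k ^+ 2 - l * b k ^+ 2 <= a k.+1 := @aS_lo1 R v hv alpha lambda k.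
have AL2 k : l * b k ^+ 2 - a k ^+ 2 <= a k.+1 := @aS_lo2 R v hv alpha lambda k.
have GL k : m k ^+ 2 <= (1 + l) * m k.+1.
  have [h1 [h2 h3]] := mf k; have [h4 [h5 h6]] := mf' k.
  exact: (gen_lower l8 (a0 k) (b0 k) (a0 k.+1) (AL1 k) (AL2 k) h1 h2 h3 h4 h5).
have GU k : m k.+1 <= (1 + l) * m k ^+ 2.
  have [h1 [h2 h3]] := mf k; have [h4 [h5 h6]] := mf' k.
  exact: (gen_upper l8 (a0 k) (b0 k) (a0 k.+1) (AU k) h1 h2 h6).
have mpos k : 0 < m k.
  elim: k => [|k IH].
    have [_ [h _]] := mf 0%N.
    have : b 0%N = 1 by rewrite /b /B_seq /= (@v1 R v hv).
    lra.
  have := GL k; have : 0 < m k ^+ 2 by apply: exprn_gt0.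
  nra.
pose h k := ln (m k) / 2 ^+ k.
have Hgen k : `|h k.+1 - h k| <= ln (1 + l) / 2 ^+ k.+1.
  apply: step_h; [exact: mpos|exact: mpos|lra|exact: GL|exact: GU].
pose t := l / (4 * M ^+ 2).
have t0 : 0 <= t by rewrite /t divr_ge0 //; nra.
pose K := Num.truncn t.
have /andP[Kt tK] := truncn_itv t0.
have M2 : 0 < 4 * M ^+ 2 by nra.
have Kl : K%:R * (4 * M ^+ 2) <= l by rewrite -ler_pdivlMr.
have lK : l < K.+1%:R * (4 * M ^+ 2) by rewrite -ltr_pdivrMr.
have inv k : (k <= K)%N -> (q - 2 * k%:R * M) * b k <= a k.
  elim: k => [|k IH] hk.
    have -> : b 0%N = 1 by rewrite /b /B_seq /= (@v1 R v hv).
    by rewrite mulr0 mul0r subr0 mulr1.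
  have hk' : (k <= K)%N by apply: ltnW.
  have IH' := IH hk'.
  have kK : k.+1%:R <= K%:R :> R by rewrite ler_nat.
  have ek : (4 * k.+1%:R * M ^+ 2) <= l by nra.
  have X1 : 0 <= (a k - (q - 2 * k%:R * M) * b k) * (a k + 2 * M * b k).
    apply: mulr_ge0; first lra. have := b0 k; nra.
  have X2 : 0 <= (l - 4 * k%:R * M^+2) * b k ^+ 2.
    apply: mulr_ge0; last exact: sqr_ge0.
    rewrite -natr1 in ek; nra.
  rewrite /b (@bS R v hv) -/(a k) -/(b k).
  have := AL1 k; rewrite -natr1; nra.
have Hgood k : (k <= K)%N -> `|h k.+1 - h k| <= ln 2 / 2 ^+ k.+1.
  move=> hk.
  have := inv k hk => ik.
  have kK : k%:R <= K%:R :> R by rewrite ler_nat.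
  have ek : (4 * k%:R * M ^+ 2) <= l by nra.
  have rb : (q / 2) * b k <= a k.
    have : q / 2 <= q - 2 * k%:R * M by nra.
    have := b0 k; nra.
  have [h1 [h2 h3]] := mf k; have [h4 [h5 h6]] := mf' k.
  have r1 : 1 <= q / 2 by lra.
  have r2 : 2 * l <= (q / 2) ^+ 2 by rewrite lq; nra.
  have [g1 g2] := good_bounds l0 r1 r2
    (a0 k) (b0 k) (a0 k.+1) rb (AL1 k) (AU k) h3 h6 h4 h1 h2.
  apply: step_h; [exact: mpos|exact: mpos|lra|exact: g1|exact: g2].
have ln2 : ln (2 : R) <= 1 by have := @le_ln1Dx R 1; rewrite (_ : 1 + 1 = 2) //; apply; lra.
have ln20 : 0 <= ln (2 : R) by apply: ln_ge0; lra.
set L := ln (1 + l).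
have L0 : 0 <= L by apply: ln_ge0; lra.
have LK : L / 2 ^+ K.+1 <= 8 * M.
  have p0 : 0 < (2:R) ^+ K by apply: exprn_gt0.
  rewrite ler_pdivrMr ?exprn_gt0 // exprS.
  have e1 : 1 + l <= (1 + 2 * M) ^+ 2 * K.+1%:R.
    have : 1 <= K.+1%:R :> R by rewrite ler1n.
    have : 0 <= M * K.+1%:R by apply: mulr_ge0; lra.
    have -> : (1 + 2 * M) ^+ 2 * K.+1%:R = K.+1%:R + 4 * (M * K.+1%:R) + K.+1%:R * (4 * M ^+ 2) by ring.
    lra.
  have e2 : L <= 4 * M + K%:R.
    have pK : 0 < K.+1%:R :> R by rewrite ltr0n.
    have p2 : 0 < (1 + 2 * M) ^+ 2 by apply: exprn_gt0; lra.
    apply: (le_trans (_ : L <= ln ((1 + 2 * M) ^+ 2 * K.+1%:R))).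
      by rewrite ler_ln ?posrE //; [lra|apply: mulr_gt0].
    rewrite lnM ?posrE // lnXn; last lra.
    have H1 : ln (1 + 2 * M) <= 2 * M by apply: le_ln1Dx; lra.
    have H2 : ln (K.+1%:R : R) <= K%:R.
      rewrite -natr1 addrC; apply: le_ln1Dx.
      by apply: (@lt_le_trans _ _ 0); [rewrite oppr_lt0 ltr01|exact: ler0n].
    rewrite mulr2n; lra.
  have e3 : K%:R <= (2:R) ^+ K.
    by rewrite -natrX ler_nat ltnW // ltn_expl.
  nra.
have T1 x y : (x <= y)%N -> (y <= K.+1)%N -> `|h y - h x| <= 1.
  move=> xy yK.
  have := tele ln20 xy (fun k _ hk => Hgood k (leq_trans hk yK)).
  have := div_pow_mono ln20 (leq0n x).
  have : 0 <= ln 2 / (2:R) ^+ y by rewrite divr_ge0 // exprn_ge0.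
  rewrite expr0 divr1; lra.
have T2 x y : (K.+1 <= x)%N -> (x <= y)%N -> `|h y - h x| <= 8 * M.
  move=> Kx xy.
  have := tele L0 xy (fun k _ _ => Hgen k).
  have := div_pow_mono L0 Kx.
  have : 0 <= L / (2:R) ^+ y by rewrite divr_ge0 // exprn_ge0.
  lra.
change (`|h n - h n0| <= 1 + 8 * M).
have [nK|Kn] := leqP n K.+1.
  have := T1 n0 n hn nK; lra.
have [Kn0|n0K] := leqP K.+1 n0.
  have := T2 n0 n Kn0 hn; lra.
have := T1 n0 K.+1 (ltnW n0K) (leqnn _).
have := T2 K.+1 n (leqnn _) (ltnW Kn).
have := ler_normD (h n - h K.+1) (h K.+1 - h n0).
rewrite addrA subrK; lra.
Qed.
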